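(* Let $U=f+g$ satisfy assumption (H1), assume that $g$ is Lipschitz, and assume $0<\int_{\mathbb{R}^d}e^{-U(x)}\,dx<\infty$. Let $\pi(x)=e^{-U(x)}/\int e^{-U}$ and, for $\lambda>0$, $\pi^\lambda(x)=e^{-U^\lambda(x)}/\int e^{-U^\lambda}$. Then for all $\lambda>0$, $$\|\pi^\lambda-\pi\|_{TV}\le\lambda\,\|g\|_{\mathrm{Lip}}^2 .$$
   Context: Assumption (H1): $U=f+g$ where $f:\mathbb{R}^d\to\mathbb{R}$ and $g:\mathbb{R}^d\to(-\infty,+\infty]$ are both bounded from below; $f$ is convex, continuously differentiable, and $\nabla f$ is $L_f$-Lipschitz; $g$ is proper, convex and lower semicontinuous. For $\lambda>0$, $g^\lambda(x)=\min_{y\in\mathbb{R}^d}\{g(y)+(2\lambda)^{-1}\|x-y\|^2\}$ and $U^\lambda=f+g^\lambda$. For a Lipschitz function $g$, $\|g\|_{\mathrm{Lip}}=\sup\{|g(x)-g(y)|/\|x-y\|: x\ne y\}$ is its smallest Lipschitz constant. $\|\mu-\nu\|_{TV}=\sup\{|\int h\,d\mu-\int h\,d\nu|: h\text{ Borel},\ \sup|h|\le1\}$, which for densities equals $\int|\mu(x)-\nu(x)|\,dx$. *)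

(* Defs.v *)
(* R^d is modelled as row vectors 'rV[R]_d. *)
From HB Require Import structures.
From mathcomp Require Import all_boot all_order all_algebra.
From mathcomp Require Import all_classical all_reals all_analysis.
Set Implicit Arguments.
Unset Strict Implicit.
Unset Printing Implicit Defensive.
Import Order.TTheory GRing.Theory Num.Theory.
Import numFieldNormedType.Exports.
Local Open Scope classical_set_scope.
Local Open Scope ring_scope.

Section Defs.
Variable R : realType.

Definition enorm (d : nat) (x : 'rV[R]_d) : R :=
  Num.sqrt (\sum_(i < d) x ord0 i ^+ 2).

(* Lebesgue integral over R^d of a nonnegative (extended-real valued)
   function, computed as the d-fold iterated integral w.r.t. the
   one-dimensional Lebesgue measure (equal to the integral w.r.t.
   d-dimensional Lebesgue measure for nonnegative Borel functions,
   by Tonelli). *)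
Fixpoint lebesgue_int (d : nat) : ('rV[R]_d -> \bar R) -> \bar R :=
  match d return ('rV[R]_d -> \bar R) -> \bar R with
  | 0 => fun F => F 0
  | n.+1 => fun F =>
      (\int[@lebesgue_measure R]_(t in setT)
         lebesgue_int (fun v : 'rV[R]_n => F (row_mx (const_mx t : 'rV[R]_1) v)))%E
  end.

Definition convex_fun (d : nat) (h : 'rV[R]_d -> R) : Prop :=
  forall (x y : 'rV[R]_d) (t : R), 0 <= t -> t <= 1 ->
    h (t *: x + (1 - t) *: y) <= t * h x + (1 - t) * h y.

Definition bounded_below (d : nat) (h : 'rV[R]_d -> R) : Prop :=
  exists m : R, forall x, m <= h x.

Definition grad (d : nat) (h : 'rV[R]_d -> R) (x : 'rV[R]_d) : 'rV[R]_d :=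
  \row_(i < d) ('d h x (delta_mx ord0 i : 'rV[R]_d)).

Definition lipschitz_eucl (d : nat) (h : 'rV[R]_d -> R) : Prop :=
  exists C : R, forall x y, `|h x - h y| <= C * enorm (x - y).

Definition lip_norm (d : nat) (h : 'rV[R]_d -> R) : R :=
  sup [set r | exists x y : 'rV[R]_d, x != y /\ r = `|h x - h y| / enorm (x - y)].

Definition moreau (d : nat) (g : 'rV[R]_d -> R) (lam : R) (x : 'rV[R]_d) : R :=
  inf [set r | exists y : 'rV[R]_d, r = g y + enorm (x - y) ^+ 2 / (2 * lam)].

Definition Zconst (d : nat) (V : 'rV[R]_d -> R) : \bar R :=
  lebesgue_int (fun x => (expR (- V x))%:E).

Definition gibbs (d : nat) (V : 'rV[R]_d -> R) (x : 'rV[R]_d) : R :=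
  expR (- V x) / fine (Zconst V).

Definition tv_dist (d : nat) (p q : 'rV[R]_d -> R) : \bar R :=
  lebesgue_int (fun x => (`|p x - q x|)%:E).

End Defs.

(* Main.v *)
Require Import Defs.
From HB Require Import structures.
From mathcomp Require Import all_boot all_order all_algebra.
From mathcomp Require Import all_classical all_reals all_analysis.
From mathcomp Require Import ring lra measurable_realfun.
Import Order.TTheory GRing.Theory Num.Theory.

Import numFieldNormedType.Exports.
Local Open Scope classical_set_scope.
Local Open Scope ring_scope.

Local Notation mfE D h := (measurable_fun (U:=measurable_realfun.constructive_ereal_extended__canonical__measurable_structure_SigmaRing _) D h).

Section Gen.
Variable R : realType.

Lemma ball_mxP (m : nat) (x z : 'rV[R]_m) e :
  ball x e z <-> (0 < e /\ forall j, `|x ord0 j - z ord0 j| < e).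
Proof.
split.
  by case=> e0 H; split => // j; have := H ord0 j.
case=> e0 H; split => // i j; rewrite (ord1 i); exact: H.
Qed.

Lemma meas_cont (m : nat) dt (T : measurableType dt) (F : 'rV[R]_m -> R)
  (A : T -> 'rV[R]_m) :
  continuous F -> (forall j, measurable_fun setT (fun x => A x ord0 j)) ->
  measurable_fun setT (fun x => F (A x)).
Proof.
move=> cF mA.
apply: (measurability _ (measurable_realfun.RGenOInfty.measurableE R)) => //.
move=> /= _ [_ [a ->] <-]; rewrite setTI preimage_itvoy.
pose P := [set y : 'rV[R]_m | a < F y].
pose box (i : ('rV[rat]_m * rat)%type) :=
  [set y : 'rV[R]_m | forall j, `|ratr (i.1 ord0 j) - y ord0 j| < ratr i.2].
pose S i := if `[< box i `<=` P >] then
  [set x | forall j, `|ratr (i.1 ord0 j) - A x ord0 j| < ratr i.2] else set0.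
rewrite (_ : [set x | a < F (A x)] = \bigcup_i S i).
  apply: countable_bigcupT_measurable; first exact: countableP.
  move=> i; rewrite /S; case: asboolP => _; last exact: measurable0.
  rewrite (_ : [set x | _] = \bigcap_(j in [set: 'I_m])
     (setT `&` (fun x => A x ord0 j) @^-1`
        `]ratr (i.1 ord0 j) - ratr i.2, ratr (i.1 ord0 j) + ratr i.2[)).
    apply: fin_bigcap_measurable; first exact: finite_finset.
    by move=> j _; apply: (mA j measurableT); exact: measurable_itv.
  apply/seteqP; split => x /=.
    by move=> H j _; split => //=; rewrite in_itv /= -ltr_distlC.
  by move=> H j; have [_] := H j Logic.I; rewrite /= in_itv /= -ltr_distlC.
apply/seteqP; split => x /=; last first.
  by case=> i _; rewrite /S; case: asboolP => // sub Hb; exact: sub.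
move=> Hx.
set y := A x.
have : nbhs y P.
  suff : nbhs (F y) [set w | a < w] by move/(cF y).
  apply/nbhs_ballP; exists (F y - a) => /=; first by rewrite subr_gt0.
  move=> w; rewrite /ball /= ltr_distlC => /andP[+ _]; rewrite /P /=; lra.
case/nbhs_ballP => e /= e0 He.
have [r] : exists r : rat, ratr r \in `]0, e / 2[ by apply: rat_in_itvoo; lra.
rewrite in_itv /= => /andP[r0 re].
have ex j : exists q : rat, ratr q \in `]y ord0 j - ratr r, y ord0 j + ratr r[.
  by apply: rat_in_itvoo; lra.
pose q := \row_j xchoose (ex j).
exists (q, r) => //; rewrite /S; case: asboolP => [_ | nsub].
  move=> j /=; rewrite mxE; have := xchooseP (ex j).
  rewrite in_itv /= ltr_distlC => /andP[h1 h2]; apply/andP; split; lra.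
exfalso; apply: nsub => z Hz; apply: He; apply/ball_mxP; split => // j.
have := Hz j; rewrite /= mxE; have := xchooseP (ex j).
rewrite in_itv /= !ltr_distlC => /andP[h1 h2] /andP[h3 h4]; apply/andP; split; lra.
Qed.

Lemma lint_ge0 n (h : 'rV[R]_n -> \bar R) :
  (forall v, (0 <= h v)%E) -> (0 <= lebesgue_int h)%E.
Proof.
elim: n h => [|n IH] h h0 /=; first exact: h0.
by apply: integral_ge0 => t _; apply: IH.
Qed.

Lemma row_mul (n k : nat) (t : R) (w : 'rV[R]_n) (M : 'M[R]_(n.+1, k)) :
  row_mx (const_mx t : 'rV_1) w *m M =
  const_mx t *m usubmx (M : 'M[R]_((1 + n)%N, k)) + w *m dsubmx (M : 'M[R]_((1 + n)%N, k)).
Proof. by rewrite -{1}(@vsubmxK _ 1 n k M) mul_row_col. Qed.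

Lemma entryE k (a : 'rV[R]_k) (t : R) (U : 'M[R]_(1, k)) j :
  (a + const_mx t *m U) ord0 j = a ord0 j + t * U ord0 j.
Proof. by rewrite !mxE big_ord1 !mxE. Qed.

Lemma lint_S n k (G : 'rV[R]_k -> \bar R) (a : 'rV[R]_k) (M : 'M[R]_(n.+1, k)) :
  lebesgue_int (fun v => G (a + v *m M)) =
  (\int[@lebesgue_measure R]_(t in setT) lebesgue_int (fun w =>
     G (a + const_mx t *m usubmx (M : 'M[R]_((1 + n)%N, k)) + w *m dsubmx (M : 'M[R]_((1 + n)%N, k)))%R))%E.
Proof.
rewrite /=; apply: eq_integral => t _; congr lebesgue_int; apply/funext => w.
by rewrite row_mul addrA.
Qed.

Lemma meas_int (m n : nat) : forall dt (T : measurableType dt)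
  (F : 'rV[R]_m -> R) (A : T -> 'rV[R]_m) (M : 'M[R]_(n, m)),
  continuous F -> (forall j, measurable_fun setT (fun x => A x ord0 j)) ->
  (forall y, 0 <= F y) ->
  mfE setT ((fun x => lebesgue_int (fun v => (F (A x + v *m M))%:E)) : T -> \bar R).
Proof.
elim: n => [|n IH] dt T F A M cF mA F0.
  rewrite /=; under eq_fun do rewrite mul0mx addr0.
  by apply/measurable_EFinP; exact: meas_cont.
pose A' (p : (T * R)%type) := A p.1 + const_mx p.2 *m usubmx (M : 'M[R]_((1 + n)%N, m)).
have mA' j : measurable_fun setT (fun p => A' p ord0 j).
  rewrite /A'; under eq_fun do rewrite entryE.
  apply: measurable_funD; first exact: measurableT_comp (mA j) measurable_fst.
  by apply: measurable_funM => //; exact: measurable_snd.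
have mI := IH _ _ F A' (dsubmx (M : 'M[R]_((1 + n)%N, m))) cF mA' F0.
rewrite (_ : (fun x => _) = fubini_F (@lebesgue_measure R)
   (fun p => lebesgue_int (fun w => (F (A' p + w *m dsubmx (M : 'M[R]_((1 + n)%N, m))))%:E))).
  apply: measurable_fun_fubini_tonelli_F => // p.
  by apply: lint_ge0 => v; rewrite lee_fin.
apply: funext => x; rewrite /fubini_F /A' /=; apply: eq_integral => t _.
by congr lebesgue_int; apply: funext => w; rewrite row_mul addrA.
Qed.

Lemma meas_sec m n (F : 'rV[R]_m -> R) (a : 'rV[R]_m) (U : 'M[R]_(1, m))
  (M : 'M[R]_(n, m)) :
  continuous F -> (forall y, 0 <= F y) ->
  mfE setT ((fun t : R =>
    lebesgue_int (fun w => (F (a + const_mx t *m U + w *m M))%:E)) : R -> \bar R).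
Proof.
move=> cF F0; apply: (@meas_int m n _ _ F (fun t : R => a + const_mx t *m U) M) => // j.
under eq_fun do rewrite entryE.
apply: measurable_funD; first exact: measurable_cst.
by apply: measurable_funM.
Qed.

Lemma L_add m n (F1 F2 : 'rV[R]_m -> R) (a : 'rV[R]_m) (M : 'M[R]_(n, m)) :
  continuous F1 -> continuous F2 -> (forall y, 0 <= F1 y) -> (forall y, 0 <= F2 y) ->
  lebesgue_int (fun v => (F1 (a + v *m M))%:E + (F2 (a + v *m M))%:E)%E =
  (lebesgue_int (fun v => (F1 (a + v *m M))%:E) +
   lebesgue_int (fun v => (F2 (a + v *m M))%:E))%E.
Proof.
move=> c1 c2 p1 p2; elim: n a M => [|n IH] a M; first by [].
rewrite (@lint_S n m (fun y => (F1 y)%:E + (F2 y)%:E)%E a M) (@lint_S n m (fun y => (F1 y)%:E) a M)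
  (@lint_S n m (fun y => (F2 y)%:E) a M).
under eq_integral => t _ do rewrite IH.
rewrite ge0_integralD //.
- by move=> t _; apply: lint_ge0 => v; rewrite lee_fin.
- exact: meas_sec.
- by move=> t _; apply: lint_ge0 => v; rewrite lee_fin.
- exact: meas_sec.
Qed.

Lemma L_scale m n (F : 'rV[R]_m -> R) (k : R) (a : 'rV[R]_m) (M : 'M[R]_(n, m)) :
  continuous F -> (forall y, 0 <= F y) -> 0 <= k ->
  lebesgue_int (fun v => (k * F (a + v *m M))%:E) =
  (k%:E * lebesgue_int (fun v => (F (a + v *m M))%:E))%E.
Proof.
move=> c1 p1 k0; elim: n a M => [|n IH] a M; first by rewrite /= EFinM.
rewrite (@lint_S n m (fun y => (k * F y)%:E) a M) (@lint_S n m (fun y => (F y)%:E) a M).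
under eq_integral => t _ do rewrite IH.
rewrite ge0_integralZl_EFin //.
- by move=> t _; apply: lint_ge0 => v; rewrite lee_fin.
- exact: meas_sec.
Qed.

Lemma L_mono m n (F1 F2 : 'rV[R]_m -> R) (a : 'rV[R]_m) (M : 'M[R]_(n, m)) :
  continuous F1 -> continuous F2 -> (forall y, 0 <= F1 y) -> (forall y, F1 y <= F2 y) ->
  (lebesgue_int (fun v => (F1 (a + v *m M))%:E) <=
   lebesgue_int (fun v => (F2 (a + v *m M))%:E))%E.
Proof.
move=> c1 c2 p1 p12.
have p2 y : 0 <= F2 y by apply: le_trans (p12 y).
elim: n a M => [|n IH] a M; first by rewrite /= lee_fin.
rewrite (@lint_S n m (fun y => (F1 y)%:E) a M) (@lint_S n m (fun y => (F2 y)%:E) a M).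
apply: ge0_le_integral => //.
- by move=> t _; apply: lint_ge0 => v; rewrite lee_fin.
- exact: meas_sec.
- exact: meas_sec.
Qed.

Lemma IE m (F : 'rV[R]_m -> R) :
  lebesgue_int (fun v => (F v)%:E) =
  lebesgue_int (fun v : 'rV_m => (F (0 + v *m 1%:M))%:E).
Proof. by congr lebesgue_int; apply: funext => v; rewrite mulmx1 add0r. Qed.

Lemma Iadd m (F1 F2 : 'rV[R]_m -> R) :
  continuous F1 -> continuous F2 -> (forall y, 0 <= F1 y) -> (forall y, 0 <= F2 y) ->
  lebesgue_int (fun v => (F1 v + F2 v)%:E) =
  (lebesgue_int (fun v => (F1 v)%:E) + lebesgue_int (fun v => (F2 v)%:E))%E.
Proof.
move=> c1 c2 p1 p2; rewrite (@IE m F1) (@IE m F2) -(@L_add m m F1 F2 0 1%:M c1 c2 p1 p2).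
by congr lebesgue_int; apply: funext => v; rewrite mulmx1 add0r EFinD.
Qed.

Lemma Iscale m (F : 'rV[R]_m -> R) (k : R) :
  continuous F -> (forall y, 0 <= F y) -> 0 <= k ->
  lebesgue_int (fun v => (k * F v)%:E) = (k%:E * lebesgue_int (fun v => (F v)%:E))%E.
Proof.
move=> c1 p1 k0; rewrite (@IE m F) -(@L_scale m m F k 0 1%:M c1 p1 k0).
by congr lebesgue_int; apply: funext => v; rewrite mulmx1 add0r.
Qed.

Lemma Imono m (F1 F2 : 'rV[R]_m -> R) :
  continuous F1 -> continuous F2 -> (forall y, 0 <= F1 y) -> (forall y, F1 y <= F2 y) ->
  (lebesgue_int (fun v => (F1 v)%:E) <= lebesgue_int (fun v => (F2 v)%:E))%E.
Proof. by move=> c1 c2 p1 p12; rewrite (@IE m F1) (@IE m F2); apply: L_mono. Qed.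
End Gen.

Section Spec.
Variable R : realType.
Variable m : nat.
Implicit Types (x y z v : 'rV[R]_m).

Lemma sum_sq_le k (a : 'I_k -> R) :
  \sum_(i < k) a i ^+ 2 <= (\sum_(i < k) `|a i|) ^+ 2.
Proof.
elim: k a => [|k IH] a; first by rewrite !big_ord0 expr0n.
rewrite !big_ord_recr /=.
have h := IH (fun i => a (widen_ord (leqnSn k) i)).
have s0 : 0 <= \sum_(i < k) `|a (widen_ord (leqnSn k) i)| by apply: sumr_ge0.
have n0 : 0 <= `|a ord_max| by [].
have e : a ord_max ^+ 2 = `|a ord_max| ^+ 2 by rewrite real_normK // num_real.
rewrite e sqrrD; nra.
Qed.

Lemma enorm_ge0 v : 0 <= enorm v.
Proof. exact: sqrtr_ge0. Qed.

Lemma enorm_sum v : enorm v <= \sum_(j < m) `|v ord0 j|.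
Proof.
rewrite /enorm -(ger0_norm (sumr_ge0 _ (fun j _ => normr_ge0 (v ord0 j)))).
rewrite -sqrtr_sqr; apply: ler_wsqrtr; exact: sum_sq_le.
Qed.

Lemma enorm0 : enorm (0 : 'rV[R]_m) = 0.
Proof.
rewrite /enorm big1 ?sqrtr0 // => j _; by rewrite mxE expr0n.
Qed.

Lemma enormN v : enorm (- v) = enorm v.
Proof. by rewrite /enorm; congr Num.sqrt; apply: eq_bigr => j _; rewrite mxE sqrrN. Qed.

Lemma enormB x y : enorm (x - y) = enorm (y - x).
Proof. by rewrite -enormN opprB. Qed.

Lemma enorm_gt0 x y : x != y -> 0 < enorm (x - y).
Proof.
move=> xy; rewrite lt_neqAle enorm_ge0 andbT eq_sym; apply/negP => /eqP h.
move: h; rewrite /enorm => /eqP; rewrite sqrtr_eq0 => hle.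
have hs : \sum_(j < m) (x - y) ord0 j ^+ 2 = 0.
  by apply/eqP; rewrite eq_le hle sumr_ge0 // => j _; exact: sqr_ge0.
move/negP: xy; apply; apply/eqP/matrixP => i j; rewrite (ord1 i).
have := psumr_eq0P (fun j _ => sqr_ge0 ((x - y) ord0 j)) hs (i := j) isT.
by rewrite !mxE => /eqP; rewrite sqrf_eq0 subr_eq0 => /eqP.
Qed.

Lemma lip_cont (h : 'rV[R]_m -> R) (C : R) :
  (forall x y, `|h x - h y| <= C * enorm (x - y)) -> continuous h.
Proof.
move=> hC x P /nbhs_ballP [e /= e0 He].
pose K := `|C| * m%:R + 1.
have K0 : 0 < K by rewrite /K; have := normr_ge0 C; have := ler0n R m; nra.
pose d := e / K.
have d0 : 0 < d by rewrite /d divr_gt0.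
apply/nbhs_ballP; exists d => //= z /ball_mxP [_ Hz]; apply: He; rewrite /ball /=.
have h1 := hC x z.
have h2 : enorm (x - z) <= m%:R * d.
  apply: le_trans (enorm_sum _) _.
  rewrite (_ : m%:R * d = \sum_(j < m) d); last by rewrite sumr_const card_ord mulr_natl.
  apply: ler_sum => j _; rewrite !mxE; exact: ltW (Hz j).
have h3 : C * enorm (x - z) <= `|C| * enorm (x - z).
  by apply: ler_wpM2r; [exact: enorm_ge0|exact: ler_norm].
have h4 : `|C| * enorm (x - z) <= `|C| * (m%:R * d) by apply: ler_wpM2l.
have h5 : K * d = e by rewrite /d mulrC divfK // gt_eqF.
have h6 : `|C| * (m%:R * d) < K * d by rewrite /K mulrDl mul1r mulrA ltrDl.
lra.
Qed.

Lemma lip_bound (g : 'rV[R]_m -> R) : lipschitz_eucl g ->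
  forall x y, `|g x - g y| <= lip_norm g * enorm (x - y).
Proof.
case=> C hC x y.
have [->|xy] := eqVneq x y; first by rewrite !subrr normr0 enorm0 mulr0.
have E0 := @enorm_gt0 x y xy.
rewrite -ler_pdivrMr //; apply: ub_le_sup; last by exists x, y.
exists C => _ [a [b [ab ->]]].
by rewrite ler_pdivrMr ?(@enorm_gt0 a b ab).
Qed.

Section Moreau.
Variables (g : 'rV[R]_m -> R) (L lam : R).
Hypothesis lam0 : 0 < lam.
Hypothesis gbb : bounded_below g.
Hypothesis hL : forall x y, `|g x - g y| <= L * enorm (x - y).

Let S x := [set r | exists y : 'rV[R]_m, r = g y + enorm (x - y) ^+ 2 / (2 * lam)].

Let S_lb x : has_lbound (S x).
Proof.
case: gbb => mg hmg; exists mg => _ [y ->].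
have : 0 <= enorm (x - y) ^+ 2 / (2 * lam) by rewrite divr_ge0 ?sqr_ge0 // mulr_ge0 // ltW.
have := hmg y; lra.
Qed.

Let S_ne x : S x !=set0.
Proof. by exists (g x + enorm (x - x) ^+ 2 / (2 * lam)), x. Qed.

Lemma moreau_le x : moreau g lam x <= g x.
Proof.
rewrite /moreau; apply: le_trans (ge_inf (S_lb x) _) _; first by exists x.
by rewrite subrr enorm0 expr0n /= mul0r addr0.
Qed.

Lemma moreau_ge x : g x - lam * L ^+ 2 / 2 <= moreau g lam x.
Proof.
rewrite /moreau; apply: lb_le_inf (S_ne x) _ => _ [y ->].
set E := enorm (x - y).
have h1 := hL x y; rewrite -/E in h1.
have h2 : g x - g y <= L * E by apply: le_trans (ler_norm _) h1.
have h3 : 0 <= (E - lam * L) ^+ 2 / (2 * lam).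
  by rewrite divr_ge0 ?sqr_ge0 // mulr_ge0 // ltW.
have h4 : (E - lam * L) ^+ 2 / (2 * lam) =
  E ^+ 2 / (2 * lam) - L * E + lam * L ^+ 2 / 2.
  by field; rewrite gt_eqF.
lra.
Qed.

Lemma moreau_lip1 x y : moreau g lam x <= moreau g lam y + L * enorm (x - y).
Proof.
rewrite -lerBlDr /moreau; apply: lb_le_inf (S_ne y) _ => _ [y' ->].
set z := y' + (x - y).
have e1 : x - z = y - y' by apply/matrixP => i j; rewrite !mxE; ring.
have e2 : z - y' = x - y by apply/matrixP => i j; rewrite !mxE; ring.
have h1 : inf (S x) <= g z + enorm (x - z) ^+ 2 / (2 * lam).
  by apply: (ge_inf (S_lb x)); exists z.
have h2 := hL z y'; rewrite e2 in h2.
have h3 : g z - g y' <= L * enorm (x - y) by apply: le_trans (ler_norm _) h2.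
rewrite e1 in h1; rewrite /S in h1 *; lra.
Qed.

Lemma moreau_lip x y :
  `|moreau g lam x - moreau g lam y| <= L * enorm (x - y).
Proof.
rewrite ler_norml; have h1 := moreau_lip1 x y; have h2 := moreau_lip1 y x.
rewrite enormB in h2; apply/andP; split; lra.
Qed.
End Moreau.
End Spec.

Section Cont.
Variable R : realType.
Variable m : nat.
Lemma cont_add (h1 h2 : 'rV[R]_m -> R) : continuous h1 -> continuous h2 ->
  continuous (fun v => h1 v + h2 v).
Proof. by move=> c1 c2 x; exact: (cvgD (c1 x) (c2 x)). Qed.
Lemma cont_expN (h : 'rV[R]_m -> R) : continuous h -> continuous (fun v => expR (- h v)).
Proof.
move=> c x; apply: (@continuous_comp _ _ _ (fun v => - h v) expR).
  exact: (cvgN (c x)).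
exact: continuous_expR.
Qed.
Lemma cont_mulr (h : 'rV[R]_m -> R) (k : R) : continuous h -> continuous (fun v => h v * k).
Proof. by move=> c x; exact: (cvgM (c x) (cvg_cst k)). Qed.
Lemma cont_mull (h : 'rV[R]_m -> R) (k : R) : continuous h -> continuous (fun v => k * h v).
Proof. by move=> c x; exact: (cvgM (cvg_cst k) (c x)). Qed.
Lemma cont_normB (h1 h2 : 'rV[R]_m -> R) : continuous h1 -> continuous h2 ->
  continuous (fun v => `|h1 v - h2 v|).
Proof.
move=> c1 c2 x; apply: (@continuous_comp _ _ _ (fun v => h1 v - h2 v) Num.Def.normr).
  exact: (cvgB (c1 x) (c2 x)).
exact: norm_continuous.
Qed.
End Cont.

Theorem proposition1 (R : realType) (d : nat)
  (f g : 'rV[R]_d -> R) (Lf : R)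
  (* (H1) for f *)
  (hf_bb : bounded_below f)
  (hf_cvx : convex_fun f)
  (hf_diff : forall x, differentiable f x)
  (hf_gradc : continuous (grad f))
  (hf_gradL : forall x y, enorm (grad f x - grad f y) <= Lf * enorm (x - y))
  (* (H1) for g : real-valued (g is Lipschitz), hence proper and lsc *)
  (hg_bb : bounded_below g)
  (hg_cvx : convex_fun g)
  (hg_lip : lipschitz_eucl g)
  (* 0 < int exp(-U) < +oo *)
  (hZ : (0 < Zconst (fun x => (f x + g x)%R) < +oo)%E) :
  forall lam : R, 0 < lam ->
    (tv_dist (gibbs (fun x => (f x + moreau g lam x)%R)) (gibbs (fun x => (f x + g x)%R))
      <= (lam * lip_norm g ^+ 2)%:E)%E.
Proof.
move=> lam lam0.
have hL := @lip_bound R d g hg_lip.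
set L := lip_norm g in hL *.
set c := lam * L ^+ 2 / 2.
have gl_le x : moreau g lam x <= g x by apply: moreau_le => //; exact: hg_bb.
have gl_ge x : g x - c <= moreau g lam x by apply: moreau_ge => //; try exact: hg_bb; try exact: hL.
have glL : forall x y, `|moreau g lam x - moreau g lam y| <= L * enorm (x - y).
  by move=> x y; apply: moreau_lip => //; try exact: hg_bb; try exact: hL.
have cf : continuous f by move=> x; exact: differentiable_continuous.
have cg : continuous g := @lip_cont R d g L hL.
have cgl : continuous (moreau g lam) := @lip_cont R d _ L glL.
pose a v := expR (- (f v + moreau g lam v)).
pose b v := expR (- (f v + g v)).
have ca : continuous a by apply: cont_expN; exact: cont_add.
have cb : continuous b by apply: cont_expN; exact: cont_add.
have a0 v : 0 <= a v by exact: expR_ge0.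
have b0 v : 0 <= b v by exact: expR_ge0.
have ba v : b v <= a v.
  by rewrite /a /b ler_expR lerN2 lerD2l.
have ab v : a v <= expR c * b v.
  rewrite /a /b -expRD ler_expR; have := gl_ge v; lra.
have ZAE : Zconst (fun x => f x + moreau g lam x) = lebesgue_int (fun v => (a v)%:E) by [].
have ZBE : Zconst (fun x => f x + g x) = lebesgue_int (fun v => (b v)%:E) by [].
rewrite ZBE in hZ; move/andP: hZ => [ZB0 ZBoo].
have ZBfin : lebesgue_int (fun v => (b v)%:E) \is a fin_num by rewrite ge0_fin_numE // ltW.
set B := fine (lebesgue_int (fun v => (b v)%:E)).
have ZBB : lebesgue_int (fun v => (b v)%:E) = B%:E by rewrite fineK.
have B0 : 0 < B by rewrite -lte_fin -ZBB.
have ZA1 : (B%:E <= lebesgue_int (fun v => (a v)%:E))%E by rewrite -ZBB; exact: Imono.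
have ZA2 : (lebesgue_int (fun v => (a v)%:E) <= (expR c * B)%:E)%E.
  rewrite EFinM -ZBB -(@Iscale R d b (expR c) cb b0 (expR_ge0 c)).
  by apply: Imono => //; exact: cont_mull.
have ZAfin : lebesgue_int (fun v => (a v)%:E) \is a fin_num.
  rewrite ge0_fin_numE; last by apply: lint_ge0 => v; rewrite lee_fin.
  exact: le_lt_trans ZA2 (ltry _).
set A := fine (lebesgue_int (fun v => (a v)%:E)).
have ZAA : lebesgue_int (fun v => (a v)%:E) = A%:E by rewrite fineK.
rewrite ZAA !lee_fin in ZA1 ZA2.
have A0 : 0 < A by exact: lt_le_trans B0 ZA1.
pose p v := a v / A.
pose q v := b v / B.
have cp : continuous p by exact: cont_mulr.
have cq : continuous q by exact: cont_mulr.
have p0 v : 0 <= p v by rewrite divr_ge0 // ltW.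
have q0 v : 0 <= q v by rewrite divr_ge0 // ltW.
have Ip : lebesgue_int (fun v => (p v)%:E) = 1%:E.
  rewrite (_ : (fun v => (p v)%:E) = (fun v => (A^-1 * a v)%:E)); last first.
    by apply: funext => v; rewrite /p mulrC.
  by rewrite Iscale // ?invr_ge0 ?ltW // ZAA -EFinM mulVf // gt_eqF.
have Iq : lebesgue_int (fun v => (q v)%:E) = 1%:E.
  rewrite (_ : (fun v => (q v)%:E) = (fun v => (B^-1 * b v)%:E)); last first.
    by apply: funext => v; rewrite /q mulrC.
  by rewrite Iscale // ?invr_ge0 ?ltW // ZBB -EFinM mulVf // gt_eqF.
have c0 : 0 <= c by rewrite /c divr_ge0 // mulr_ge0 ?sqr_ge0 // ltW.
set k := expR (- c).
have k1 : k <= 1 by rewrite /k expR_le1 oppr_le0.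
have k0 : 0 <= k by exact: expR_ge0.
have kqp v : k * q v <= p v.
  have e : k * q v = b v / (expR c * B).
    rewrite /k /q expRN; field; apply/andP; split; rewrite gt_eqF //; exact: expR_gt0.
  rewrite e /p; apply: (@le_trans _ _ (b v / A)).
    rewrite ler_wpM2l // lef_pV2 ?posrE // mulr_gt0 //; exact: expR_gt0.
  by rewrite ler_pM2r ?invr_gt0.
have kqq v : k * q v <= q v by rewrite ler_piMl.
have pt v : `|p v - q v| + (2 * k) * q v <= p v + q v.
  have h1 := kqp v; have h2 := kqq v.
  have : `|p v - q v| <= p v + q v - 2 * k * q v.
    by rewrite ler_norml; apply/andP; split; lra.
  lra.
have cn : continuous (fun v => `|p v - q v|) by exact: cont_normB.
have c2q : continuous (fun v => (2 * k) * q v) by exact: cont_mull.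
have n0 v : 0 <= `|p v - q v| by [].
have q20 v : 0 <= (2 * k) * q v by rewrite mulr_ge0 // mulr_ge0.
have I2q : lebesgue_int (fun v => ((2 * k) * q v)%:E) = (2 * k)%:E.
  by rewrite Iscale ?Iq ?mule1 // mulr_ge0.
have Isum := @Iadd R d _ _ cn c2q n0 q20.
rewrite I2q in Isum.
have Ipq := @Iadd R d _ _ cp cq p0 q0.
rewrite Ip Iq in Ipq.
have Imn : (lebesgue_int (fun v => (`|p v - q v| + (2 * k) * q v)%:E) <=
            lebesgue_int (fun v => (p v + q v)%:E))%E.
  apply: Imono => //.
  all: try exact: cont_add.
  all: try (by move=> v; apply: addr_ge0).
  all: try exact: pt.
rewrite Isum Ipq in Imn.
have final : (lebesgue_int (fun v => (`|p v - q v|)%:E) <= (lam * L ^+ 2)%:E)%E.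
  have TV0 : (0 <= lebesgue_int (fun v => (`|p v - q v|)%:E))%E.
    by apply: lint_ge0 => v; rewrite lee_fin.
  have kc : 1 - c <= k by rewrite /k; have := expR_ge1Dx (- c); lra.
  move: Imn TV0; case: (lebesgue_int _) => [t| |] //=.
  rewrite -!EFinD !lee_fin => h _.
  rewrite /c in kc; lra.
rewrite /tv_dist /gibbs ZAE ZBE ZAA ZBB /=.
exact: final.
Qed.
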